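(* Let $K$ be any field, $n\ge 3$, $V$ an $n$-dimensional $K$-vector space, and let $X$ be a symmetric generating set of $SL(V)$ with $1\in X$ which contains a whole transvection group $t^K$. Let $$Y_1=\{x_{n^2}\cdots x_1\, t^\lambda\, x_1^{-1}\cdots x_{n^2}^{-1}\,:\,\lambda\in K,\ x_1,\ldots,x_{n^2}\in X\},$$ and assume that every edge of the transvection graph $\Gamma(Y_1)$ is two-way directed. Then $\Gamma(Y_1)$ contains a non-singular chordless cycle, i.e. there are $k\ge 3$ and pairwise distinct transvections $r_1,\ldots,r_k\in Y_1\setminus\{1\}$, $r_i=1+v_i\otimes\phi_i$, such that for $i\neq j$, $(r_i,r_j)$ is an edge if and only if $i-j\equiv\pm1\pmod k$, and $$\prod_{i=1}^k\phi_i(v_{i+1})+(-1)^{k-1}\prod_{i=1}^k\phi_{i+1}(v_i)\neq 0,$$ indices taken modulo $k$.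
   Context: A transvection is an element $1+d\otimes\phi\in SL(V)$ acting by $x\mapsto x+\phi(x)d$, with $0\ne d\in V$, $0\ne\phi\in V^*$, $\phi(d)=0$; $t^\lambda=1+\lambda d\otimes\phi$ for $t=1+d\otimes\phi$, and $t^K=\{t^\lambda:\lambda\in K\}$. For a set $Y$ of transvections, $\Gamma(Y)$ is the directed graph with vertex set $Y\setminus\{1\}$ with a directed edge $(r,s)$ from $r=1+d_1\otimes\phi_1$ to $s=1+d_2\otimes\phi_2$ iff $\phi_2(d_1)\neq 0$; an edge $(r,s)$ is two-way directed if $(s,r)$ is also an edge. The non-singularity condition does not depend on the choice of representatives $v_i,\phi_i$. *)

(* Defs.v *)
(* V = K^n as column vectors 'cV[K]_n, V^* = row vectors 'rV[K]_n;
   d (x) phi is the n x n matrix d *m phi, acting on x by x |-> phi(x) d. *)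
From HB Require Import structures.
From mathcomp Require Import all_boot all_order all_algebra.
Set Implicit Arguments. Unset Strict Implicit. Unset Printing Implicit Defensive.
Import GRing.Theory.
Local Open Scope ring_scope.

Section Defs.
Variables (K : fieldType) (n : nat).

Definition mx := 'M[K]_n.

Definition ev (phi : 'rV[K]_n) (v : 'cV[K]_n) : K := (phi *m v) ord0 ord0.

Definition tv_data (d : 'cV[K]_n) (phi : 'rV[K]_n) : Prop :=
  d != 0 /\ phi != 0 /\ ev phi d = 0.

Definition tv (d : 'cV[K]_n) (phi : 'rV[K]_n) : mx := 1%:M + d *m phi.

Definition tv_pow (d : 'cV[K]_n) (phi : 'rV[K]_n) (l : K) : mx :=
  1%:M + l *: (d *m phi).

Definition is_transvection (t : mx) : Prop :=
  exists d phi, tv_data d phi /\ t = tv d phi.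

Definition mxprod (s : seq mx) : mx := foldr (@mulmx K n n n) 1%:M s.

Definition generates_SL (X : mx -> Prop) : Prop :=
  (forall x, X x -> \det x = 1) /\
  (forall g : mx, \det g = 1 <->
     exists s : seq mx, (forall y, y \in s -> X y \/ X (invmx y)) /\ g = mxprod s).

Definition symmetric_set (X : mx -> Prop) : Prop := forall x, X x -> X (invmx x).

(* directed edge (r, s) of Gamma(Y): r = 1 + d1 (x) phi1, s = 1 + d2 (x) phi2,
   phi2(d1) <> 0 (independent of the representatives) *)
Definition tedge (r s : mx) : Prop :=
  exists d1 phi1 d2 phi2, tv_data d1 phi1 /\ tv_data d2 phi2 /\
    r = tv d1 phi1 /\ s = tv d2 phi2 /\ ev phi2 d1 != 0.

Definition vertex (Y : mx -> Prop) (r : mx) : Prop := Y r /\ r <> 1%:M.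

Definition Y1 (X : mx -> Prop) (d : 'cV[K]_n) (phi : 'rV[K]_n) (g : mx) : Prop :=
  exists (l : K) (x : 'I_(n ^ 2) -> mx), (forall i, X (x i)) /\
    g = mxprod [seq x (rev_ord i) | i <- enum 'I_(n ^ 2)]
        *m tv_pow d phi l
        *m mxprod [seq invmx (x i) | i <- enum 'I_(n ^ 2)].

End Defs.

(* Main.v *)
Require Import Defs.
From HB Require Import structures.
From mathcomp Require Import all_boot all_order all_algebra zify ring.
From Stdlib Require Import Classical Lia.
Set Implicit Arguments. Unset Strict Implicit. Unset Printing Implicit Defensive.
Import GRing.Theory.
Local Open Scope ring_scope.


Lemma map_ord (T U : Type) (x0 : T) (f : T -> U) (s : seq T) N : size s = N ->
  [seq f (nth x0 s i) | i : 'I_N <- enum 'I_N] = map f s.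
Proof.
move=> sz.
have -> : [seq f (nth x0 s i) | i : 'I_N <- enum 'I_N] = [seq f (nth x0 s i) | i : nat <- map val (enum 'I_N)].
  by rewrite -map_comp.
by rewrite val_enum_ord -sz map_comp map_nth_iota0 // take_size.
Qed.
Lemma map_rev_ord (T : Type) (x0 : T) (s : seq T) N : size s = N ->
  [seq nth x0 (rev s) (rev_ord i) | i : 'I_N <- enum 'I_N] = s.
Proof.
move=> sz; transitivity (map id s); last by rewrite map_id.
rewrite -(map_ord x0 id sz); apply: eq_map => i /=; rewrite nth_rev sz ?rev_ord_proof // ?size_rev ?sz ?rev_ord_proof //; congr nth.
have := ltn_ord i; lia.
Qed.

Section Basic.
Variables (K : fieldType) (n : nat).
Implicit Types (u v w : 'cV[K]_n) (p q : 'rV[K]_n) (A B : 'M[K]_n).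

Lemma evE p v : p *m v = (ev p v)%:M.
Proof. by rewrite /ev [LHS]mx11_scalar. Qed.

Lemma mul_ev u p v : u *m p *m v = ev p v *: u.
Proof. by rewrite -mulmxA evE mul_mx_scalar. Qed.

Lemma mul_ev_l p u q : p *m (u *m q) = ev p u *: q.
Proof. by rewrite mulmxA evE mul_scalar_mx. Qed.

Lemma ev_mull p A v : ev (p *m A) v = ev p (A *m v).
Proof. by rewrite /ev mulmxA. Qed.

Lemma evDl p q v : ev (p + q) v = ev p v + ev q v.
Proof. by rewrite /ev mulmxDl mxE. Qed.
Lemma evDr p v w : ev p (v + w) = ev p v + ev p w.
Proof. by rewrite /ev mulmxDr mxE. Qed.
Lemma evZl a p v : ev (a *: p) v = a * ev p v.
Proof. by rewrite /ev -scalemxAl mxE. Qed.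
Lemma evZr a p v : ev p (a *: v) = a * ev p v.
Proof. by rewrite /ev -scalemxAr mxE. Qed.
Lemma evNl p v : ev (- p) v = - ev p v.
Proof. by rewrite -scaleN1r evZl mulN1r. Qed.
Lemma evNr p v : ev p (- v) = - ev p v.
Proof. by rewrite -scaleN1r evZr mulN1r. Qed.
Lemma ev0l v : ev 0 v = 0.
Proof. by rewrite /ev mul0mx mxE. Qed.
Lemma ev0r p : ev p 0 = 0.
Proof. by rewrite /ev mulmx0 mxE. Qed.

Lemma invmxM A B : A \in unitmx -> B \in unitmx -> invmx (A *m B) = invmx B *m invmx A.
Proof.
move=> uA uB.
have uAB : A *m B \in unitmx by rewrite unitmx_mul uA uB.
have h : A *m B *m (invmx B *m invmx A) = 1%:M.
  by rewrite mulmxA -(mulmxA A) mulmxV // mulmx1 mulmxV.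
by rewrite -[LHS]mulmx1 -h (mulmxA (invmx (A *m B))) mulVmx // mul1mx.
Qed.

End Basic.


Section Rep.
Variables (K : fieldType) (n : nat).
Implicit Types (u v w a b : 'cV[K]_n) (p q : 'rV[K]_n) (A B : 'M[K]_n).

Lemma cV_nz a : a != 0 -> exists i, a i 0 != 0.
Proof.
move=> /eqP a0; apply: NNPP => H; apply: a0; apply/matrixP => i j.
rewrite (ord1 j) mxE; apply/eqP; apply: negbNE; apply/negP => Hi; apply: H; by exists i.
Qed.

Lemma rV_nz p : p != 0 -> exists j, p 0 j != 0.
Proof.
move=> /eqP a0; apply: NNPP => H; apply: a0; apply/matrixP => i j.
rewrite (ord1 i) mxE; apply/eqP; apply: negbNE; apply/negP => Hi; apply: H; by exists j.
Qed.

Lemma outerE a p i j : (a *m p) i j = a i 0 * p 0 j.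
Proof. by rewrite mxE big_ord1. Qed.

Lemma outer_nz a p : a != 0 -> p != 0 -> a *m p != 0.
Proof.
move=> /cV_nz [i hi] /rV_nz [j hj]; apply/negP => /eqP h.
have := congr1 (fun M : 'M[K]_n => M i j) h; rewrite outerE mxE => /eqP.
by rewrite mulf_eq0 (negPf hi) (negPf hj).
Qed.

Lemma outer_uniq a p a' p' : a != 0 -> p != 0 -> a' != 0 -> p' != 0 ->
  a *m p = a' *m p' -> exists c : K, [/\ c != 0, a' = c *: a & p = c *: p'].
Proof.
move=> a0 p0 a'0 p'0 h.
have E i j : a i 0 * p 0 j = a' i 0 * p' 0 j.
  by rewrite -!outerE h.
have [j hj] := rV_nz p0.
have hj' : p' 0 j != 0.
  apply/negP => /eqP z; have [i hi] := cV_nz a0.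
  by move: (E i j); rewrite z mulr0 => /eqP; rewrite mulf_eq0 (negPf hi) (negPf hj).
pose c := p 0 j / p' 0 j.
have c0 : c != 0 by rewrite /c mulf_neq0 // invr_eq0.
have ha : a' = c *: a.
  apply/matrixP => i k; rewrite (ord1 k) mxE /c.
  by rewrite mulrC mulrA E mulfK.
exists c; split => //.
have [i hi] := cV_nz a0.
apply/matrixP => k l; rewrite (ord1 k) mxE.
have := E i l; rewrite ha mxE -mulrA mulrCA => h2.
exact: (mulfI hi h2).
Qed.

Lemma tv_uniq a p a' p' : tv_data a p -> tv_data a' p' -> tv a p = tv a' p' ->
  exists c : K, [/\ c != 0, a' = c *: a & p = c *: p'].
Proof.
move=> [a0 [p0 _]] [a'0 [p'0 _]]; rewrite /tv => /addrI h.
exact: outer_uniq.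
Qed.

Lemma tedgeE a p a' p' : tv_data a p -> tv_data a' p' ->
  (tedge (tv a p) (tv a' p') <-> ev p' a != 0).
Proof.
move=> h h'; split; last by move=> e; exists a, p, a', p'.
move=> [d1 [p1 [d2 [p2 [h1 [h2 [e1 [e2 ne]]]]]]]].
have [c [c0 E1 E2]] := tv_uniq h h1 e1.
have [c' [c'0 E3 E4]] := tv_uniq h' h2 e2.
move: ne; rewrite E1 E4 evZr evZl mulf_eq0 negb_or => /andP [_ ne].
by rewrite mulf_neq0.
Qed.

Lemma tv_neq a p a' p' : tv_data a p -> tv_data a' p' -> ev p' a != 0 ->
  tv a p <> tv a' p'.
Proof.
move=> h h' ne e.
have [c [c0 ea ep]] := tv_uniq h h' e.
move: ne; rewrite -(scalerK c0 p') -ep evZl.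
by case: h => _ [_ ->]; rewrite mulr0 eqxx.
Qed.

Lemma tv_ne1 a p : tv_data a p -> tv a p <> 1%:M.
Proof.
move=> [a0 [p0 _]]; rewrite /tv -[X in _ = X]addr0 => /addrI /eqP.
by rewrite (negPf (outer_nz a0 p0)).
Qed.

End Rep.


Section LinAlg.
Variables (K : fieldType) (n : nat).
Implicit Types (a v : 'cV[K]_n) (p q : 'rV[K]_n).

Lemma ev_delta_r p j : ev p (delta_mx j 0) = p 0 j.
Proof. by rewrite /ev -colE mxE. Qed.

Lemma ev_delta_l i v : ev (delta_mx 0 i) v = v i 0.
Proof. by rewrite /ev -rowE mxE. Qed.

Lemma exists_nz1 p : p != 0 -> exists a, ev p a != 0.
Proof. by move=> /rV_nz [j hj]; exists (delta_mx j 0); rewrite ev_delta_r. Qed.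

Lemma exists_nz2 p q : p != 0 -> q != 0 -> exists a, ev p a != 0 /\ ev q a != 0.
Proof.
move=> p0 q0; have [a1 h1] := exists_nz1 p0; have [a2 h2] := exists_nz1 q0.
case: (eqVneq (ev q a1) 0) => e1; last by exists a1.
case: (eqVneq (ev p a2) 0) => e2; last by exists a2.
by exists (a1 + a2); rewrite !evDr e1 e2 add0r addr0.
Qed.

Lemma exists_sep a v p : v != 0 -> ev p v = 0 -> ev p a != 0 ->
  exists b, ev b a = 0 /\ ev b v != 0.
Proof.
move=> /cV_nz [i hi] pv pa.
pose e : 'rV[K]_n := delta_mx 0 i.
exists (e - (ev e a / ev p a) *: p); rewrite !evDl !evNl !evZl pv mulr0 subr0.
by rewrite divfK // subrr ev_delta_l.
Qed.

Lemma exists_ann a v : (3 <= n)%N -> exists b, [/\ b != 0, ev b v = 0 & ev b a = 0].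
Proof.
move=> hn; set B := row_mx v a.
have : kermx B != 0.
  rewrite -mxrank_eq0 mxrank_ker; have := rank_leq_col B; move: (\rank B) => r hr.
  apply/eqP => h; lia.
case/rowV0Pn => b /sub_kermxP hb b0; exists b; split => //.
  by move: hb; rewrite mul_mx_row => /(congr1 lsubmx); rewrite row_mxKl linear0 /ev => ->; rewrite mxE.
by move: hb; rewrite mul_mx_row => /(congr1 rsubmx); rewrite row_mxKr linear0 /ev => ->; rewrite mxE.
Qed.

Lemma det_transv a p : ev p a = 0 -> \det (1%:M + a *m p) = 1.
Proof.
move=> pa.
have pa0 : p *m a = 0.
  by rewrite evE pa; apply/matrixP => i j; rewrite !mxE mul0rn.
have E : block_mx (1%:M + a *m p) (- a) 0 1%:M *m block_mx 1%:M 0 p 1%:M =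
         block_mx 1%:M 0 p 1%:M *m block_mx 1%:M (- a) 0 (1%:M + p *m a).
  rewrite !mulmx_block !mulmx1 !mul1mx !mulmx0 !mul0mx !addr0 !add0r.
  by rewrite mulNmx addrK mulmxN pa0 oppr0 add0r addr0.
move: (congr1 determinant E); rewrite !det_mulmx det_ublock !det_lblock det_ublock pa0 addr0 !det1.
by rewrite !mulr1.
Qed.

End LinAlg.

Section Main.
Variables (K : fieldType) (n : nat) (X : 'M[K]_n -> Prop) (d : 'cV[K]_n) (phi : 'rV[K]_n).
Hypotheses (hn : (3 <= n)%N) (hgen : generates_SL X) (hsym : symmetric_set X) (h1 : X 1%:M)
  (hd : tv_data d phi) (htK : forall l : K, X (tv_pow d phi l))
  (htwo : forall r s, vertex (Y1 X d phi) r -> vertex (Y1 X d phi) s ->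
            tedge r s -> tedge s r).

Definition G k (g : 'M[K]_n) := exists xs : seq 'M[K]_n,
  [/\ size xs = k, (forall x, x \in xs -> X x) & g = mxprod xs].

Lemma X_det x : X x -> \det x = 1.
Proof. by case: hgen => h _; apply: h. Qed.

Lemma X_unit x : X x -> x \in unitmx.
Proof. by move/X_det => h; rewrite unitmxE h unitr1. Qed.

Lemma mxprod_cons (x : 'M[K]_n) s : mxprod (x :: s) = x *m mxprod s.
Proof. by []. Qed.

Lemma mxprod_det (s : seq 'M[K]_n) : (forall x, x \in s -> X x) -> \det (mxprod s) = 1.
Proof.
elim: s => [|x s IH] hs; first by rewrite /mxprod /= det1.
have hs' : forall y, y \in s -> X y by move=> y ys; apply: hs; rewrite in_cons ys orbT.
by rewrite mxprod_cons det_mulmx (X_det (hs x (mem_head x s))) (IH hs') mul1r.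
Qed.

Lemma G_det k g : G k g -> \det g = 1.
Proof. by case=> xs [_ hx ->]; apply: mxprod_det. Qed.

Lemma G_unit k g : G k g -> g \in unitmx.
Proof. by move/G_det => h; rewrite unitmxE h unitr1. Qed.

Lemma G0 : G 0 1%:M.
Proof. by exists [::]. Qed.

Lemma G_cons k x g : X x -> G k g -> G k.+1 (x *m g).
Proof.
move=> hx [xs [s hs ->]]; exists (x :: xs); split => //=; first by rewrite s.
by move=> y; rewrite in_cons => /orP [/eqP -> | /hs].
Qed.

Lemma G_mono k k' g : G k g -> (k <= k')%N -> G k' g.
Proof.
move=> hg /subnKC <-; elim: (k' - k)%N => [|m IH]; first by rewrite addn0.
by rewrite addnS -(mul1mx g); apply: G_cons.
Qed.

Lemma Xinv_X y : X (invmx y) -> X y.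
Proof. by move/hsym; rewrite invmxK. Qed.

Lemma SL_prod g : \det g = 1 -> exists ys, (forall y, y \in ys -> X y) /\ g = mxprod ys.
Proof.
case: hgen => _ h /h [ys [hy ->]]; exists ys; split => // y /hy [] //; exact: Xinv_X.
Qed.

Definition R := (n ^ 2)%N.
Definition u (g : 'M[K]_n) := g *m d.
Definition ps (g : 'M[K]_n) := phi *m invmx g.
Definition A (g h : 'M[K]_n) := ev (ps g) (u h).

Lemma tv_powE l : tv_pow d phi l = 1%:M + (l *: d) *m phi.
Proof. by rewrite /tv_pow scalemxAl. Qed.

Lemma conjE g l : g \in unitmx ->
  g *m tv_pow d phi l *m invmx g = tv (l *: u g) (ps g).
Proof.
move=> ug; rewrite tv_powE mulmxDr mulmx1 mulmxDl mulmxV // /tv /u /ps.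
by rewrite !mulmxA scalemxAr.
Qed.

Lemma data_g g l : g \in unitmx -> l != 0 -> tv_data (l *: u g) (ps g).
Proof.
move=> ug l0; case: hd => d0 [p0 e0]; split; [|split].
- rewrite scaler_eq0 negb_or l0 /=; apply/negP => /eqP h.
  by move: d0; rewrite -(mulKmx ug d) -/(u g) h mulmx0 eqxx.
- apply/negP => /eqP h.
  by move: p0; rewrite -(mulmxKV ug phi) -/(ps g) h mul0mx eqxx.
- by rewrite evZr /A /ps /u ev_mull mulmxA mulVmx // mul1mx e0 mulr0.
Qed.

Lemma mxprod_rcons (s : seq 'M[K]_n) x : mxprod (rcons s x) = mxprod s *m x.
Proof.
elim: s => [|y s IH]; first by rewrite /mxprod /= mul1mx mulmx1.
by rewrite rcons_cons !mxprod_cons IH mulmxA.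
Qed.

Lemma mxprod_inv_rev (s : seq 'M[K]_n) : (forall x, x \in s -> X x) ->
  mxprod (map invmx (rev s)) = invmx (mxprod s).
Proof.
elim: s => [|x s IH] hs; first by rewrite /mxprod /= invmx1.
have hs' : forall y, y \in s -> X y by move=> y yi; apply: hs; rewrite in_cons yi orbT.
rewrite rev_cons map_rcons mxprod_rcons IH // mxprod_cons invmxM //.
  by apply: X_unit; apply: hs; exact: mem_head.
by rewrite unitmxE mxprod_det // unitr1.
Qed.

Lemma Y1_G g l : G R g -> Y1 X d phi (g *m tv_pow d phi l *m invmx g).
Proof.
case=> xs [sz hx ->]; exists l, (fun i : 'I_(n ^ 2) => nth 1%:M (rev xs) i).
split.
  move=> i; apply: hx; rewrite -mem_rev; apply: mem_nth; rewrite size_rev sz.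
  exact: ltn_ord.
rewrite (map_rev_ord 1%:M sz); congr (_ *m _).
have sz' : size (rev xs) = (n ^ 2)%N by rewrite size_rev.
rewrite (map_ord 1%:M (@invmx K n) sz').
by rewrite mxprod_inv_rev.
Qed.

Lemma vertex_G g l : G R g -> l != 0 -> vertex (Y1 X d phi) (tv (l *: u g) (ps g)).
Proof.
move=> hg l0; split; first by rewrite -conjE ?(G_unit hg) //; apply: Y1_G.
apply: tv_ne1; apply: data_g => //; exact: (G_unit hg).
Qed.

Lemma data1 g : g \in unitmx -> tv_data (u g) (ps g).
Proof. by move=> ug; rewrite -[u g]scale1r; apply: data_g => //; exact: oner_neq0. Qed.

Lemma vertex1 g : G R g -> vertex (Y1 X d phi) (tv (u g) (ps g)).
Proof. by move=> hg; rewrite -[u g]scale1r; apply: vertex_G => //; exact: oner_neq0. Qed.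

Lemma TW g h : G R g -> G R h -> A h g != 0 -> A g h != 0.
Proof.
move=> hg hh e.
have dg := data1 (G_unit hg); have dh := data1 (G_unit hh).
have := htwo (vertex1 hg) (vertex1 hh); rewrite !tedgeE //; exact.
Qed.

Lemma TWeq g h : G R g -> G R h -> (A h g == 0) = (A g h == 0).
Proof.
move=> hg hh; apply/idP/idP; apply: contraLR => ne.
  exact: TW.
exact: TW.
Qed.

Lemma G_R1 : G R 1%:M.
Proof. exact: (G_mono G0 (leq0n _)). Qed.

Lemma u1 : u 1%:M = d. Proof. by rewrite /u mul1mx. Qed.
Lemma ps1 : ps 1%:M = phi. Proof. by rewrite /ps invmx1 mulmx1. Qed.

Definition al g := A 1%:M g.
Definition be g := A g 1%:M.

Lemma alE g : al g = ev phi (u g). Proof. by rewrite /al /A ps1. Qed.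
Lemma beE g : be g = ev (ps g) d. Proof. by rewrite /be /A u1. Qed.

Lemma al_be g : G R g -> (al g != 0) = (be g != 0).
Proof. by move=> hg; rewrite /al /be (TWeq G_R1 hg). Qed.

Lemma tpow_inv mu : invmx (tv_pow d phi mu) = tv_pow d phi (- mu).
Proof.
have e : tv_pow d phi mu *m tv_pow d phi (- mu) = 1%:M.
  have DD : d *m phi *m (d *m phi) = 0 by rewrite mulmxA mul_ev (proj2 (proj2 hd)) scale0r mul0mx.
  have DD2 : (mu *: (d *m phi)) *m ((- mu) *: (d *m phi)) = 0.
    by rewrite -scalemxAr -scalemxAl DD !scaler0.
  rewrite /tv_pow mulmxDr mulmx1 mulmxDl mul1mx DD2 addr0.
  by rewrite scaleNr addrK.
have ut := proj1 (mulmx1_unit e).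
by rewrite -[LHS]mulmx1 -e mulmxA mulVmx // mul1mx.
Qed.

Lemma u_t mu h : u (tv_pow d phi mu *m h) = u h + (mu * al h) *: d.
Proof.
by rewrite /u -mulmxA tv_powE mulmxDl mul1mx -/(u h) mul_ev alE scalerA mulrC.
Qed.

Lemma ps_t mu h : h \in unitmx -> ps (tv_pow d phi mu *m h) = ps h - (mu * be h) *: phi.
Proof.
move=> uh; have ut : tv_pow d phi mu \in unitmx.
  by rewrite -(invmxK (tv_pow d phi mu)) unitmx_inv tpow_inv unitmxE (X_det (htK _)) unitr1.
rewrite /ps invmxM // tpow_inv mulmxA tv_powE mulmxDr mulmx1 -/(ps h).
by rewrite mulmxA -scalemxAr evE -scalemxAl mul_scalar_mx -beE scalerA mulNr scaleNr.
Qed.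

Lemma A_tl mu h g : h \in unitmx -> A (tv_pow d phi mu *m h) g = A h g - mu * be h * al g.
Proof. by move=> uh; rewrite /A ps_t // evDl evNl evZl -alE -/(A h g). Qed.

Lemma A_tr mu g h : A g (tv_pow d phi mu *m h) = A g h + mu * al h * be g.
Proof. by rewrite /A u_t evDr evZr -beE -/(A g h). Qed.

Lemma R_gt0 : (0 < R)%N.
Proof. by rewrite /R expn_gt0; apply/orP; left; apply: leq_trans hn. Qed.

Lemma G_t mu k h : G k h -> G k.+1 (tv_pow d phi mu *m h).
Proof. by apply: G_cons. Qed.

Lemma GR1R g : G (R - 1) g -> G R g.
Proof. by move=> h; apply: (G_mono h); exact: leq_subr. Qed.

Lemma GR1t mu h : G (R - 1) h -> G R (tv_pow d phi mu *m h).
Proof. by move=> /(G_t mu); rewrite subn1 prednK // R_gt0. Qed.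

Lemma star g h : G R g -> G (R - 1) h -> al g != 0 -> al h != 0 ->
  A h g * al h * be g + A g h * al g * be h = 0.
Proof.
move=> hg h1h ag ah.
have hh := GR1R h1h.
have bh : be h != 0 by rewrite -al_be.
pose mu := A h g / (be h * al g).
have E1 : A h g = mu * (be h * al g) by rewrite /mu divfK // mulf_neq0.
have hmu := GR1t mu h1h.
have Z1 : A (tv_pow d phi mu *m h) g = 0.
  by rewrite A_tl ?(G_unit hh) // E1 mulrA subrr.
have Z2 : A g (tv_pow d phi mu *m h) = 0.
  case: (eqVneq (A g (tv_pow d phi mu *m h)) 0) => // ne.
  by move: (TW hmu hg ne); rewrite Z1 eqxx.
move: Z2; rewrite A_tr => /eqP; rewrite addr_eq0 => /eqP E2.
rewrite E2 E1; ring.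
Qed.

Definition cM g := g *m (d *m phi) *m invmx g.
Definition Pk k (M : 'M[K]_n) := exists g, G k g /\ M = cM g.

Lemma span_ind (P : 'M[K]_n -> Prop) (s : seq 'M[K]_n) : P 0 ->
  (forall a x w, x \in s -> P w -> P (a *: x + w)) -> forall v, v \in <<s>>%VS -> P v.
Proof.
elim: s => [|x s IH] P0 Pst v.
  by rewrite span_nil memv0 => /eqP ->.
rewrite span_cons => /memv_addP [y /vlineP [a ->] [w hw ->]].
have Pst' : forall b z w', z \in s -> P w' -> P (b *: z + w').
  by move=> b z w' hz; apply: Pst; rewrite in_cons hz orbT.
apply: Pst; first exact: mem_head.
exact: (IH P0 Pst' w hw).
Qed.

Lemma cM1 : cM 1%:M = d *m phi.
Proof. by rewrite /cM mul1mx invmx1 mulmx1. Qed.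

Lemma dim_le (s : seq 'M[K]_n) : (\dim <<s>> <= n * n)%N.
Proof. by apply: (leq_trans (dimvS (subvf _))); rewrite dimvf. Qed.

Lemma Pk_mono k M : Pk k M -> Pk k.+1 M.
Proof. by case=> g [hg ->]; exists g; split => //; apply: (G_mono hg). Qed.

Lemma chain : exists k, (k < R)%N /\ exists s : seq 'M[K]_n,
  (forall M, M \in s -> Pk k M) /\ (forall M, Pk k.+1 M -> M \in <<s>>%VS).
Proof.
apply: NNPP => H.
have step : forall k, (k < R)%N -> forall s : seq 'M[K]_n, (forall M, M \in s -> Pk k M) ->
    exists M, Pk k.+1 M /\ ~ (M \in <<s>>%VS).
  move=> k kR s hs; apply: NNPP => H2; apply: H; exists k; split => //; exists s; split => //.
  move=> M hM; apply: NNPP => H3; apply: H2; by exists M.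
have grow : forall k, (k <= R)%N -> exists s : seq 'M[K]_n,
    (forall M, M \in s -> Pk k M) /\ (k.+1 <= \dim <<s>>)%N.
  elim=> [|k IH] kR.
    exists [:: d *m phi]; split.
      move=> M; rewrite inE => /eqP ->; exists 1%:M; split; [exact: G0 | by rewrite cM1].
    rewrite span_seq1 dim_vline; case: hd => d0 [p0 _].
    by rewrite (outer_nz d0 p0).
  have [s [hs hdim]] := IH (ltnW kR).
  have [M [hM nM]] := step k kR s hs.
  exists (M :: s); split.
    move=> N; rewrite in_cons => /orP [/eqP -> // | /hs]; exact: Pk_mono.
  have sub : (<<s>> <= <<M :: s>>)%VS by apply: sub_span => N hN; rewrite in_cons hN orbT.
  have := ltn_leqif (dimv_leqif_sup sub).
  have nsub : ~~ (<<M :: s>> <= <<s>>)%VS.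
    apply/negP => hsub; apply: nM; apply: (subvP hsub); apply: memv_span; exact: mem_head.
  rewrite nsub => lt; exact: leq_ltn_trans hdim lt.
have [s [_ hs]] := grow R (leqnn R).
by move: (leq_trans hs (dim_le s)); rewrite /R mulnn ltnn.
Qed.

Lemma cM_mul x g : x \in unitmx -> g \in unitmx -> cM (x *m g) = x *m cM g *m invmx x.
Proof. by move=> ux ug; rewrite /cM invmxM // !mulmxA. Qed.

Lemma KEY (L : 'M[K]_n -> K) (Llin : forall a M N, L (a *: M + N) = a * L M + L N) :
  (forall g, G (R - 1) g -> L (cM g) = 0) -> forall g, \det g = 1 -> L (cM g) = 0.
Proof.
move=> HL g dg.
have [k [kR [s [hs hcl]]]] := chain.
have inv : forall x, X x -> forall M, M \in <<s>>%VS -> x *m M *m invmx x \in <<s>>%VS.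
  move=> x hx; apply: span_ind.
    by rewrite mulmx0 mul0mx mem0v.
  move=> a y w hy hw.
  rewrite mulmxDr mulmxDl -scalemxAr -scalemxAl; apply: memvD => //; apply: memvZ.
  have [h [hh ->]] := hs y hy.
  apply: hcl; exists (x *m h); split; first exact: G_cons.
  by rewrite cM_mul ?(X_unit hx) ?(G_unit hh).
have [ys [hys ->]] := SL_prod dg.
have Din : cM (mxprod ys) \in <<s>>%VS.
  elim: ys hys => [|y ys IH] hys.
    rewrite /mxprod /=; apply: hcl; exists 1%:M; split => //.
    exact: (G_mono G0 (leq0n _)).
  have hys' : forall z, z \in ys -> X z by move=> z zi; apply: hys; rewrite in_cons zi orbT.
  have hy : X y by apply: hys; exact: mem_head.
  rewrite mxprod_cons cM_mul ?(X_unit hy) //; last by rewrite unitmxE mxprod_det // unitr1.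
  exact: inv (IH hys').
have L0 : L 0 = 0.
  by move/eqP: (Llin 1 0 0); rewrite scaler0 addr0 mul1r -subr_eq subrr eq_sym => /eqP.
apply: (span_ind (P := fun M => L M = 0) L0 _ Din) => a y w hy hw.
rewrite Llin hw addr0.
have [h [hh ->]] := hs y hy.
rewrite HL ?mulr0 //; apply: (G_mono hh); by rewrite -ltnS subn1 prednK // R_gt0.
Qed.

Hypothesis hnc : ~ (exists (k : nat) (v : nat -> 'cV[K]_n) (ps : nat -> 'rV[K]_n),
    [/\ (3 <= k)%N,
      (forall i, (i < k)%N -> tv_data (v i) (ps i) /\ vertex (Y1 X d phi) (tv (v i) (ps i))),
      (forall i j, (i < k)%N -> (j < k)%N -> i <> j -> tv (v i) (ps i) <> tv (v j) (ps j)),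
      (forall i j, (i < k)%N -> (j < k)%N -> i <> j ->
         (tedge (tv (v i) (ps i)) (tv (v j) (ps j)) <->
          (j = (i + 1) %% k \/ i = (j + 1) %% k)%N)) &
      \prod_(i < k) ev (ps i) (v ((i + 1) %% k)%N)
        + (-1) ^+ (k - 1) * \prod_(i < k) ev (ps ((i + 1) %% k)%N) (v i) != 0]).

Lemma NCgen (gs : seq 'M[K]_n) : (3 <= size gs)%N -> (forall g, g \in gs -> G R g) ->
  (forall i j, (i < size gs)%N -> (j < size gs)%N -> i <> j ->
     tv (u (nth 1%:M gs i)) (ps (nth 1%:M gs i)) <> tv (u (nth 1%:M gs j)) (ps (nth 1%:M gs j))) ->
  (forall i j, (i < size gs)%N -> (j < size gs)%N -> i <> j ->
     (A (nth 1%:M gs j) (nth 1%:M gs i) != 0 <->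
       (j = (i + 1) %% size gs \/ i = (j + 1) %% size gs)%N)) ->
  \prod_(i < size gs) A (nth 1%:M gs i) (nth 1%:M gs ((i + 1) %% size gs)%N)
   + (-1) ^+ (size gs - 1) * \prod_(i < size gs) A (nth 1%:M gs ((i + 1) %% size gs)%N) (nth 1%:M gs i) = 0.
Proof.
move=> k3 hG hneq hadj; apply/eqP; apply: negbNE; apply/negP => ne; apply: hnc.
have hGi : forall i, (i < size gs)%N -> G R (nth 1%:M gs i).
  by move=> i hi; apply: hG; apply: mem_nth.
exists (size gs), (fun i => u (nth 1%:M gs i)), (fun i => ps (nth 1%:M gs i)); split => //.
- move=> i hi; split; [exact: data1 (G_unit (hGi i hi)) | exact: vertex1 (hGi i hi)].
- move=> i j hi hj ij; rewrite tedgeE; [exact: hadj | exact: data1 (G_unit (hGi i hi)) | exact: data1 (G_unit (hGi j hj))].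
Qed.

Lemma NC3 g0 g1 g2 : G R g0 -> G R g1 -> G R g2 ->
  A g0 g1 != 0 -> A g1 g0 != 0 -> A g1 g2 != 0 -> A g2 g1 != 0 ->
  A g0 g2 != 0 -> A g2 g0 != 0 ->
  A g0 g1 * A g1 g2 * A g2 g0 + A g1 g0 * A g2 g1 * A g0 g2 = 0.
Proof.
move=> G0' G1' G2' e01 e10 e12 e21 e02 e20.
have hG : forall g, g \in [:: g0; g1; g2] -> G R g.
  by move=> g; rewrite !inE => /or3P [] /eqP ->.
have hGi : forall i, (i < 3)%N -> G R (nth 1%:M [:: g0; g1; g2] i).
  by move=> i hi; apply: hG; apply: mem_nth.
have := @NCgen [:: g0; g1; g2] isT hG.
have hadj : forall i j, (i < 3)%N -> (j < 3)%N -> i <> j ->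
   A (nth 1%:M [:: g0; g1; g2] j) (nth 1%:M [:: g0; g1; g2] i) != 0.
  by move=> [|[|[|i]]] [|[|[|j]]] //=.
have hdist : forall i j, (i < 3)%N -> (j < 3)%N -> i <> j ->
    tv (u (nth 1%:M [:: g0; g1; g2] i)) (ps (nth 1%:M [:: g0; g1; g2] i)) <>
    tv (u (nth 1%:M [:: g0; g1; g2] j)) (ps (nth 1%:M [:: g0; g1; g2] j)).
  move=> i j hi hj ij; apply: tv_neq.
  + exact: data1 (G_unit (hGi i hi)).
  + exact: data1 (G_unit (hGi j hj)).
  + exact: (hadj i j hi hj ij).
have hiff : forall i j, (i < 3)%N -> (j < 3)%N -> i <> j ->
    (A (nth 1%:M [:: g0; g1; g2] j) (nth 1%:M [:: g0; g1; g2] i) != 0 <->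
       (j = (i + 1) %% 3 \/ i = (j + 1) %% 3)%N).
  move=> i j hi hj ij; split => _; last exact: hadj.
  by move: i j hi hj ij => [|[|[|i]]] [|[|[|j]]] //= _ _ _; first [by left | by right].
move=> /(_ hdist hiff); rewrite !big_ord_recr !big_ord0 /= => key.
rewrite -key; ring.
Qed.

Lemma NC4 g0 g1 g2 g3 : G R g0 -> G R g1 -> G R g2 -> G R g3 ->
  A g0 g1 != 0 -> A g1 g0 != 0 -> A g1 g2 != 0 -> A g2 g1 != 0 ->
  A g2 g3 != 0 -> A g3 g2 != 0 -> A g3 g0 != 0 -> A g0 g3 != 0 ->
  A g0 g2 = 0 -> A g2 g0 = 0 -> A g1 g3 = 0 -> A g3 g1 = 0 ->
  tv (u g0) (ps g0) <> tv (u g2) (ps g2) -> tv (u g1) (ps g1) <> tv (u g3) (ps g3) ->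
  A g0 g1 * A g1 g2 * A g2 g3 * A g3 g0 - A g1 g0 * A g2 g1 * A g3 g2 * A g0 g3 = 0.
Proof.
move=> G0' G1' G2' G3' e01 e10 e12 e21 e23 e32 e30 e03 z02 z20 z13 z31 n02 n13.
have hG : forall g, g \in [:: g0; g1; g2; g3] -> G R g.
  by move=> g; rewrite !inE => /or4P [] /eqP ->.
have hGi : forall i, (i < 4)%N -> G R (nth 1%:M [:: g0; g1; g2; g3] i).
  by move=> i hi; apply: hG; apply: mem_nth.
have := @NCgen [:: g0; g1; g2; g3] isT hG.
have hdist : forall i j, (i < 4)%N -> (j < 4)%N -> i <> j ->
    tv (u (nth 1%:M [:: g0; g1; g2; g3] i)) (ps (nth 1%:M [:: g0; g1; g2; g3] i)) <>
    tv (u (nth 1%:M [:: g0; g1; g2; g3] j)) (ps (nth 1%:M [:: g0; g1; g2; g3] j)).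
  move=> [|[|[|[|i]]]] [|[|[|[|j]]]] //= _ _ _;
   try (by move/esym); try (by []);
   (apply: tv_neq; [apply: data1; apply: G_unit; eassumption
                   | apply: data1; apply: G_unit; eassumption | by []]).
have hiff : forall i j, (i < 4)%N -> (j < 4)%N -> i <> j ->
    (A (nth 1%:M [:: g0; g1; g2; g3] j) (nth 1%:M [:: g0; g1; g2; g3] i) != 0 <->
       (j = (i + 1) %% 4 \/ i = (j + 1) %% 4)%N).
  move=> [|[|[|[|i]]]] [|[|[|[|j]]]] //= _ _ _;
   first [ split; [by move=> _; left | by move=> _]
         | split; [by move=> _; right | by move=> _]
         | split; [by rewrite ?z02 ?z20 ?z13 ?z31 eqxx | by case] ].
move=> /(_ hdist hiff); rewrite !big_ord_recr !big_ord0 /= => key.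
rewrite -key; ring.
Qed.

Definition Ad h := G (R - 1) h /\ al h != 0.
Definition ka h := al h / be h.

Lemma Ad_GR h : Ad h -> G R h.
Proof. by case=> /GR1R. Qed.

Lemma Ad_be h : Ad h -> be h != 0.
Proof. by move=> hA; rewrite -(al_be (Ad_GR hA)); case: hA. Qed.

Lemma alt g h : G R g -> al g != 0 -> Ad h -> ka g * A g h = - (ka h * A h g).
Proof.
move=> hg ag hA; have := star hg (proj1 hA) ag (proj2 hA).
have bg : be g != 0 by rewrite -al_be.
have bh := Ad_be hA.
rewrite /ka => E.
apply/eqP; rewrite -addr_eq0; apply/eqP.
have -> : al g / be g * A g h + al h / be h * A h g =
  (A h g * al h * be g + A g h * al g * be h) / (be g * be h).
  by field; rewrite bh bg.
by rewrite E mul0r.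
Qed.

Lemma lincomb (x a b c : K) : x != 0 -> x * (a - b) = c -> c = 0 -> a = b.
Proof.
move=> x0 E c0; move: E; rewrite c0 => /eqP; rewrite mulf_eq0 (negPf x0) /= subr_eq0.
by move/eqP.
Qed.

Lemma CL w r s : G R w -> Ad r -> Ad s -> A w r * ka s * A s w = A w s * ka r * A r w.
Proof.
move=> Gw Ar As.
have Gr := Ad_GR Ar; have Gs := Ad_GR As.
have ar := proj2 Ar; have as_ := proj2 As.
have br := Ad_be Ar; have bs := Ad_be As.
have dr := data1 (G_unit Gr); have ds := data1 (G_unit Gs); have dw := data1 (G_unit Gw).
have d1 := data1 (G_unit G_R1).
case: (eqVneq (al w) 0) => aw; last first.
  have bw : be w != 0 by rewrite -al_be.
  have kw : ka w != 0 by rewrite /ka mulf_neq0 // invr_eq0.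
  have E1 := alt Gw aw Ar; have E2 := alt Gw aw As.
  apply: (mulfI kw); rewrite !mulrA E1 E2 /ka; field; by rewrite br bs.
have bw : be w = 0 by move: (al_be Gw); rewrite aw eqxx => /esym /negbFE /eqP.
case: (eqVneq (A w r) 0) => wr.
  have rw : A r w = 0 by apply/eqP; rewrite -(TWeq Gr Gw) wr.
  by rewrite wr rw !mul0r mulr0.
case: (eqVneq (A w s) 0) => ws.
  have sw : A s w = 0 by apply/eqP; rewrite -(TWeq Gs Gw) ws.
  by rewrite ws sw !mul0r mulr0.
have rw : A r w != 0 by apply: TW.
have sw : A s w != 0 by apply: TW.
case: (classic (tv (u r) (ps r) = tv (u s) (ps s))) => [ers | nrs].
  have [c [c0 Eus Eps]] := tv_uniq dr ds ers.
  have Ews : A w s = c * A w r by rewrite /A Eus evZr.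
  have Erw : A r w = c * A s w by rewrite /A Eps evZl.
  have Eals : al s = c * al r by rewrite !alE Eus evZr.
  have Ebr : be r = c * be s by rewrite !beE Eps evZl.
  rewrite /ka Ews Erw Eals Ebr; field.
  by rewrite c0 bs.
case: (classic (tv (u 1%:M) (ps 1%:M) = tv (u w) (ps w))) => [e1w | n1w].
  have [c [c0 Euw Eps1]] := tv_uniq d1 dw e1w.
  have Ealr : al r = c * A w r by rewrite /al /A Eps1 evZl.
  have Eals : al s = c * A w s by rewrite /al /A Eps1 evZl.
  have Erw : A r w = c * be r by rewrite /be /A Euw evZr.
  have Esw : A s w = c * be s by rewrite /be /A Euw evZr.
  rewrite /ka Ealr Eals Erw Esw; field.
  by rewrite br bs.
case: (eqVneq (A r s) 0) => rs.
  have sr : A s r = 0 by apply/eqP; rewrite (TWeq Gr Gs) rs.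
  have N4 := NC4 G_R1 Gr Gw Gs ar br rw wr ws sw bs as_ aw bw rs sr n1w nrs.
  apply: (lincomb (x := - (be r * be s)) _ _ N4); first by rewrite oppr_eq0 mulf_neq0.
  rewrite /ka -/(al r) -/(al s) -/(be r) -/(be s). field.
  by rewrite br bs.
have sr : A s r != 0 by apply: TW.
have N3 := NC3 Gr Gw Gs rw wr ws sw rs sr.
have Alt := alt Gr ar As.
have Alt' : ka r * A r s + ka s * A s r = 0 by rewrite Alt addNr.
apply: (lincomb (x := A r s) rs _ (c := ka s * (A r w * A w s * A s r + A w r * A s w * A r s)
   - A r w * A w s * (ka r * A r s + ka s * A s r))).
  ring.
by rewrite N3 Alt' mulr0 mulr0 subr0.
Qed.

Lemma cM_split g : cM g = u g *m ps g.
Proof. by rewrite /cM /u /ps !mulmxA. Qed.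

Lemma Lev_lin (q : 'rV[K]_n) (v : 'cV[K]_n) a M N :
  ev q ((a *: M + N) *m v) = a * ev q (M *m v) + ev q (N *m v).
Proof. by rewrite mulmxDl -scalemxAl evDr evZr. Qed.

Lemma inv_transv (a : 'cV[K]_n) (b : 'rV[K]_n) : ev b a = 0 ->
  invmx (1%:M + a *m b) = 1%:M - a *m b.
Proof.
move=> ba.
have e : (1%:M + a *m b) *m (1%:M - a *m b) = 1%:M.
  rewrite mulmxDr mulmx1 mulmxDl mul1mx mulmxN mulmxA mul_ev ba scale0r mul0mx.
  by rewrite subr0 addrK.
have ut := proj1 (mulmx1_unit e).
by rewrite -[LHS]mulmx1 -[X in invmx _ *m X]e mulmxA mulVmx // mul1mx.
Qed.

Lemma u_transv (a : 'cV[K]_n) (b : 'rV[K]_n) : u (1%:M + a *m b) = d + ev b d *: a.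
Proof. by rewrite /u mulmxDl mul1mx mul_ev. Qed.

Lemma ps_transv (a : 'cV[K]_n) (b : 'rV[K]_n) : ev b a = 0 ->
  ps (1%:M + a *m b) = phi - ev phi a *: b.
Proof. by move=> ba; rewrite /ps inv_transv // mulmxDr mulmx1 mulmxN mul_ev_l. Qed.

Lemma SPAN (th : 'rV[K]_n) : ev th d = 0 -> (forall h, Ad h -> ev th (u h) = 0) -> th = 0.
Proof.
move=> thd thA; apply/eqP; apply: negbNE; apply/negP => th0.
case: hd => d0 [p0 pd].
have [a [ta pa]] := exists_nz2 th0 p0.
have [b [ba bd]] := exists_sep d0 pd pa.
have dg := det_transv ba.
have Ec : forall g, ev th (cM g *m d) = be g * ev th (u g).
  by move=> g; rewrite cM_split mul_ev evZr beE.
have prem : forall h, G (R - 1) h -> ev th (cM h *m d) = 0.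
  move=> h hh; rewrite Ec; case: (eqVneq (al h) 0) => ah.
    have : be h == 0 by move: (al_be (GR1R hh)); rewrite ah eqxx => /esym /negbFE.
    by move/eqP => ->; rewrite mul0r.
  by rewrite thA ?mulr0 //; split.
move: (KEY (L := fun M => ev th (M *m d)) (Lev_lin th d) prem dg).
rewrite Ec beE u_transv ps_transv // evDl evNl evZl evDr evZr thd pd add0r => /eqP.
by rewrite mulNr oppr_eq0 !mulf_eq0 (negPf pa) (negPf bd) add0r mulf_eq0 (negPf bd) (negPf ta).
Qed.

Lemma FINAL : False.
Proof.
case: hd => d0 [p0 pd].
have [a pa] := exists_nz1 p0.
have [b [b0 bd ba]] := exists_ann a d hn.
have dg := det_transv ba.
have Eug : u (1%:M + a *m b) = d by rewrite u_transv bd scale0r addr0.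
have Epg := ps_transv ba.
have REL : forall r s, Ad r -> Ad s -> al r * ev b (u s) = al s * ev b (u r).
  move=> r s Ar As.
  have Llin : forall x M N, (fun M => ka s * ev (ps s) (M *m u r) - ka r * ev (ps r) (M *m u s))
      (x *: M + N) = x * (fun M => ka s * ev (ps s) (M *m u r) - ka r * ev (ps r) (M *m u s)) M
        + (fun M => ka s * ev (ps s) (M *m u r) - ka r * ev (ps r) (M *m u s)) N.
    by move=> x M N /=; rewrite !Lev_lin; ring.
  have prem : forall h, G (R - 1) h ->
      ka s * ev (ps s) (cM h *m u r) - ka r * ev (ps r) (cM h *m u s) = 0.
    move=> h hh; rewrite !cM_split !mul_ev !evZr.
    have E := CL (GR1R hh) Ar As.
    rewrite -/(A h r) -/(A s h) -/(A h s) -/(A r h).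
    apply/eqP; rewrite subr_eq0; apply/eqP.
    transitivity (A h r * ka s * A s h); first ring.
    rewrite E; ring.
  have := KEY Llin prem dg; rewrite !cM_split Eug Epg !mul_ev !evZr.
  rewrite !evDl !evNl !evZl -!alE.
  have kb : forall x, Ad x -> ka x * ev (ps x) d = al x.
    by move=> x Ax; rewrite -beE /ka divfK // Ad_be.
  rewrite -!beE.
  have kbs := kb s As; have kbr := kb r Ar; rewrite -!beE in kbs kbr.
  move=> E.
  have : ev phi a * (al r * ev b (u s) - al s * ev b (u r)) = 0.
    rewrite -E /ka; field; by rewrite !Ad_be.
  move/eqP; rewrite mulf_eq0 (negPf pa) /= subr_eq0 => /eqP.
  done.
case: (classic (exists r0, Ad r0)) => [[r0 A0] | nA].
  pose c := ev b (u r0) / al r0.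
  have th0 : b - c *: phi = 0.
    apply: SPAN.
      by rewrite evDl evNl evZl bd pd mulr0 subrr.
    move=> h Ah; rewrite evDl evNl evZl -alE /c.
    have := REL r0 h A0 Ah => E.
    apply/eqP; rewrite subr_eq0; apply/eqP.
    apply: (mulfI (proj2 A0)); rewrite E; field; exact: (proj2 A0).
  have hb : b = c *: phi by apply/eqP; rewrite -subr_eq0 th0.
  move: ba; rewrite hb evZl => /eqP; rewrite mulf_eq0 (negPf pa) orbF => /eqP c0.
  by move: b0; rewrite hb c0 scale0r eqxx.
have : b = 0.
  apply: SPAN => // h Ah; exfalso; apply: nA; by exists h.
by move/eqP; rewrite (negPf b0).
Qed.

End Main.

Theorem lemma4p6 (K : fieldType) (n : nat) (hn : (3 <= n)%N)
  (X : 'M[K]_n -> Prop) (d : 'cV[K]_n) (phi : 'rV[K]_n)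
  (hgen : generates_SL X) (hsym : symmetric_set X) (h1 : X 1%:M)
  (hd : tv_data d phi) (htK : forall l : K, X (tv_pow d phi l))
  (htwo : forall r s, vertex (Y1 X d phi) r -> vertex (Y1 X d phi) s ->
            tedge r s -> tedge s r) :
  exists (k : nat) (v : nat -> 'cV[K]_n) (ps : nat -> 'rV[K]_n),
    [/\ (3 <= k)%N,
      (forall i, (i < k)%N -> tv_data (v i) (ps i) /\ vertex (Y1 X d phi) (tv (v i) (ps i))),
      (forall i j, (i < k)%N -> (j < k)%N -> i <> j -> tv (v i) (ps i) <> tv (v j) (ps j)),
      (forall i j, (i < k)%N -> (j < k)%N -> i <> j ->
         (tedge (tv (v i) (ps i)) (tv (v j) (ps j)) <->
          (j = (i + 1) %% k \/ i = (j + 1) %% k)%N)) &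
      \prod_(i < k) ev (ps i) (v ((i + 1) %% k)%N)
        + (-1) ^+ (k - 1) * \prod_(i < k) ev (ps ((i + 1) %% k)%N) (v i) != 0].
Proof.
apply: NNPP => hnc.
exact: (FINAL hn hgen hsym h1 hd htK htwo hnc).
Qed.
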